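(* Let $K\subset\mathbb{R}^M$ be compact with positive Lebesgue measure, for each $N$ let $\mu_N$ be a probability measure on a finite set $\Sigma_N$, and let $F_N:\mathbb{R}^M\times\Sigma_N\to\mathbb{R}$, $F:\mathbb{R}^M\to\mathbb{R}$ be measurable such that their restrictions to $K$ satisfy: $\sup_N\sup_{K\times\Sigma_N}|F_N|<\infty$, $F$ is bounded on $K$, for every $\varepsilon>0$ $\mu_N(\{s:\sup_{\mathbf{p}\in K}|F_N(\mathbf{p},s)-F(\mathbf{p})|>\varepsilon\})\to0$, and $\lim_N\frac1N\log\int_Ke^{NF}=\sup_KF$. Assume moreover: (a) there is $C_1<\infty$ with $\sup_N\sup_{\mathbb{R}^M\times\Sigma_N}F_N<C_1$; (b) there is $C_2<\infty$ with $\int_{\mathbb{R}^M}e^{F_N(\mathbf{p},s)}d\mathbf{p}<C_2$ for all $N$ and $s\in\Sigma_N$; (c) there is $\delta>0$ with $F_N(\mathbf{p},s)-\sup_KF<-\delta$ for all $N$ and all $(\mathbf{p},s)\in K^c\times\Sigma_N$. Then $$\lim_{N\to\infty}\frac1N\,\mathbb{E}_{\mu_N}\Big[\log\int_{\mathbb{R}^M}e^{NF_N(\mathbf{p},s)}d\mathbf{p}\Big]=\sup_KF.$$ *)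

(* Defs.v *)
From HB Require Import structures.
From mathcomp Require Import all_boot all_order all_algebra.
From mathcomp Require Import all_classical all_reals all_analysis.

Set Implicit Arguments.
Unset Strict Implicit.
Unset Printing Implicit Defensive.

Import Order.TTheory GRing.Theory Num.Theory.
Import numFieldNormedType.Exports.

Local Open Scope classical_set_scope.
Local Open Scope ring_scope.

Section prod_sigma_finite.
Local Open Scope ereal_scope.
Context d1 d2 (T1 : measurableType d1) (T2 : measurableType d2) (R : realType).
Variable m1 : {sigma_finite_measure set T1 -> \bar R}.
Variable m2 : {sigma_finite_measure set T2 -> \bar R}.

Definition prodm := (m1 \x m2)%E.

HB.instance Definition _ := Measure.on prodm.

Lemma prodm_sigma_finite : sigma_finite setT prodm.
Proof.
have /sigma_finiteP[F [TF ndF Foo]] := sigma_finiteT m1.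
have /sigma_finiteP[G [TG ndG Goo]] := sigma_finiteT m2.
exists (fun n => F n `*` G n).
  rewrite -setXTT TF TG predeqE => -[x y]; split.
    move=> [/= [n _ Fnx] [k _ Gky]]; exists (maxn n k) => //; split.
    - by move: x Fnx; exact/subsetPset/ndF/leq_maxl.
    - by move: y Gky; exact/subsetPset/ndG/leq_maxr.
  by move=> [n _ []/= ? ?]; split; exists n.
move=> k; have [? ?] := Foo k; have [? ?] := Goo k.
split; first exact: measurableX.
by rewrite /prodm product_measure1E// lte_mul_pinfty// ge0_fin_numE.
Qed.

HB.instance Definition _ := Measure_isSigmaFinite.Build _ _ _ prodm
  prodm_sigma_finite.

End prod_sigma_finite.

(* Lebesgue measure on R^M, restricted to the Borel sets of R^M.             *)
(* R^M is realised as the nested product R * (R * ( ... * unit)) carrying    *)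
(* the product (= Borel) sigma-algebra and the iterated product measure      *)
(* lambda \x (lambda \x ( ... \x dirac tt)), lambda = Lebesgue measure on R. *)
(* [vec_of] is the canonical bijection of this nested product onto the       *)
(* row-vector space 'rV[R]_M (which carries the usual topology/norm of R^M). *)

Record RnSpace (R : realType) := MkRnSpace {
  rn_disp : measure_display;
  rn_type : measurableType rn_disp;
  rn_meas : {sigma_finite_measure set rn_type -> \bar R} }.

Definition lebR (R : realType) : {sigma_finite_measure set _ -> \bar R} :=
  @lebesgue_measure R.

Fixpoint Rn (R : realType) (M : nat) : RnSpace R :=
  match M with
  | 0 => @MkRnSpace R _ unit (@dirac _ unit tt R)
  | m.+1 => @MkRnSpace R _ _ (prodm (lebR R) (rn_meas (Rn R m)))
  end.

Definition RM (R : realType) (M : nat) := rn_type (Rn R M).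
Definition lebesgueM (R : realType) (M : nat) := rn_meas (Rn R M).

(* Coordinates: (x, y) |-> the row vector (x, y_0, ..., y_{m-1}). *)
Fixpoint vec_of (R : realType) (M : nat) : RM R M -> 'rV[R]_M :=
  match M return RM R M -> 'rV[R]_M with
  | 0 => fun _ => 0
  | m.+1 => fun x =>
      \row_(i < m.+1)
        (match unlift ord0 i with
         | None => x.1
         | Some j => vec_of x.2 ord0 j
         end)
  end.

Definition intRM (R : realType) (M : nat) (A : set 'rV[R]_M)
    (f : 'rV[R]_M -> \bar R) : \bar R :=
  (\int[lebesgueM R M]_(x in vec_of (M:=M) @^-1` A) f (vec_of x))%E.

Definition lebM (R : realType) (M : nat) (A : set 'rV[R]_M) : \bar R :=
  lebesgueM R M (vec_of (M:=M) @^-1` A).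

Definition measurableRM (R : realType) (M : nat) (f : 'rV[R]_M -> R) : Prop :=
  measurable_fun setT (f \o vec_of (M:=M)).

(* Main.v *)
Require Import Defs.
From HB Require Import structures.
From mathcomp Require Import all_boot all_order all_algebra.
From mathcomp Require Import all_classical all_reals all_analysis.
From mathcomp Require Import measurable_realfun lra ring finmap.
Import Order.TTheory GRing.Theory Num.Theory.
Import numFieldNormedType.Exports.
Local Open Scope classical_set_scope.
Local Open Scope ring_scope.

Lemma box_meas (R : realType) (m : nat) (P : 'I_m -> set R) :
  (forall j, measurable (P j)) ->
  measurable (@vec_of R m @^-1` [set y | forall j, P j (y ord0 j)]).
Proof.
elim: m P => [|m IH] P mP.
  rewrite [X in measurable X](_ : _ = setT); first exact: measurableT.
  by apply/seteqP; split => // x _ [].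
rewrite [X in measurable X](_ : _ =
   (P ord0) `*` (@vec_of R m @^-1` [set y | forall j, P (lift ord0 j) (y ord0 j)])).
  apply: measurableX; first exact: mP.
  exact: (IH (fun j => P (lift ord0 j)) (fun j => mP _)).
apply/seteqP; split => [[a b]|[a b]] /=.
  move=> H; split.
    by have := H ord0; rewrite mxE unlift_none.
  by move=> j; have := H (lift ord0 j); rewrite mxE liftK.
move=> [Ha Hb] j; rewrite mxE.
by case: unliftP => [k ->|->] //.
Qed.

Lemma itv_meas (R : realType) (c r : R) : measurable [set x : R | `|c - x| <= r].
Proof.
rewrite [X in measurable X](_ : _ = [set` `[c - r, c + r]]); first exact: measurable_itv.
apply/seteqP; split => x /=; rewrite in_itv /= ler_norml; lra.
Qed.

Lemma inv_small (R : realType) (e : R) : 0 < e -> exists n : nat, n.+1%:R^-1 < e.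
Proof.
move=> e0; exists (Num.truncn e^-1).
by rewrite invf_plt ?posrE ?invr_gt0 // truncnS_gt.
Qed.

Lemma compact_meas (R : realType) (M : nat) (K : set 'rV[R]_M) :
  compact K -> measurable (@vec_of R M @^-1` K).
Proof.
move=> cK.
have cl : closed K by apply: compact_closed => //; exact: norm_hausdorff.
pose B (x : 'rV[R]_M) (r : R) := [set y : 'rV[R]_M | forall j, `|x ord0 j - y ord0 j| <= r].
have H n : exists D : {fset 'rV[R]_M}, {subset D <= K} /\
    K `<=` \bigcup_(x in [set` D]) B x (n.+1%:R^-1).
  have := cK; rewrite compact_cover => /(_ _ K (fun x => ball x n.+1%:R^-1)).
  case.
  - by move=> i _; exact: ball_open.
  - by move=> x Kx; exists x => //; exact: ballxx.
  move=> D sub cov; exists D; split=> // y /cov [x Dx bxy]; exists x => //.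
  move=> j; case: bxy => _ /(_ ord0 j).
  rewrite /ball /= => /ltW; done.
have [D HD] := choice H.
rewrite [X in measurable X](_ : _ =
   \bigcap_n \bigcup_(x in [set` D n]) (@vec_of R M @^-1` B x (n.+1%:R^-1))).
  apply: bigcap_measurable => [|n _]; first by exists 0%N.
  apply: fin_bigcup_measurable; first exact: finite_fset.
  move=> x _.
  have := @box_meas R M (fun j => [set a | `|x ord0 j - a| <= n.+1%:R^-1]) (fun j => @itv_meas R _ _).
  exact.
apply/seteqP; split => p /=.
  move=> Kp n _; have [_ /(_ _ Kp)] := HD n.
  by case=> x Dx Bx; exists x.
move=> Hp; apply: cl => U /nbhs_ballP [e e0 sU].
have [n ne] := @inv_small R e e0.
have [x Dx Bx] := Hp n I.
have [sub _] := HD n.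
exists x; split; first by have := sub _ Dx; rewrite in_setE.
apply: sU; split => // i j.
rewrite (ord1 i) /ball /=.
by rewrite distrC; apply: le_lt_trans (Bx j) ne.
Qed.

Section ints.
Variables (R : realType) (d : measure_display) (T : measurableType d) (mu : {measure set T -> \bar R}).

Lemma mexp (D : set T) (f : T -> R) (k : R) :
  measurable_fun D f -> measurable_fun D (fun x => (expR (k * f x))%:E).
Proof.
move=> mf; apply/measurable_EFinP.
apply: measurableT_comp => //.
exact: measurable_funM.
Qed.

Lemma int_upper (f : T -> R) (c : R) (n : nat) :
  measurable_fun setT f -> (forall x, f x <= c) ->
  (\int[mu]_x (expR (n.+1%:R * f x))%:E <=
     (expR (n%:R * c))%:E * \int[mu]_x (expR (1 * f x))%:E)%E.
Proof.
move=> mf fc.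
rewrite -ge0_integralZl_EFin //; last exact: (mexp _ _ _ mf).
apply: ge0_le_integral => //.
- exact: (mexp _ _ _ mf).
- apply/measurable_EFinP; apply: measurable_funM => //.
  by apply/measurable_EFinP; exact: (mexp _ _ _ mf).
move=> x _; rewrite /= lee_fin -expRD ler_expR.
rewrite -natr1 mulrDl mul1r lerD2r.
by apply: ler_wpM2l => //.
Qed.

Lemma int_lower (D : set T) (f : T -> R) (b k : R) :
  measurable D -> measurable_fun D f -> 0 <= k -> (forall x, D x -> b <= f x) ->
  ((expR (k * b))%:E * mu D <= \int[mu]_(x in D) (expR (k * f x))%:E)%E.
Proof.
move=> mD mf k0 fb.
rewrite -integral_cst //.
apply: ge0_le_integral => //.
- by move=> x _; rewrite lee_fin expR_ge0.
- exact: (mexp _ _ _ mf).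
by move=> x Dx; rewrite /= lee_fin ler_expR ler_wpM2l // fb.
Qed.

Lemma int_mono (D : set T) (f g : T -> R) (k : R) :
  measurable D -> measurable_fun D f -> measurable_fun D g -> 0 <= k ->
  (forall x, D x -> f x <= g x) ->
  (\int[mu]_(x in D) (expR (k * f x))%:E <= \int[mu]_(x in D) (expR (k * g x))%:E)%E.
Proof.
move=> mD mf mg k0 fg.
apply: ge0_le_integral => //; [exact: (mexp _ _ _ mf)|exact: (mexp _ _ _ mg)|].
by move=> x Dx; rewrite /= lee_fin ler_expR ler_wpM2l // fg.
Qed.

Lemma int_sub (D : set T) (f : T -> R) (k : R) :
  measurable D -> measurable_fun setT f ->
  (\int[mu]_(x in D) (expR (k * f x))%:E <= \int[mu]_x (expR (k * f x))%:E)%E.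
Proof.
move=> mD mf.
apply: ge0_subset_integral => //; exact: (mexp _ _ _ mf).
Qed.

Lemma int_upper_cst (D : set T) (f : T -> R) (b k : R) :
  measurable D -> measurable_fun D f -> 0 <= k -> (forall x, D x -> f x <= b) ->
  (\int[mu]_(x in D) (expR (k * f x))%:E <= (expR (k * b))%:E * mu D)%E.
Proof.
move=> mD mf k0 fb.
rewrite -integral_cst //.
apply: ge0_le_integral => //; try exact: (mexp _ _ _ mf);
  try by move=> x _; rewrite lee_fin expR_ge0.
by move=> x Dx; rewrite /= lee_fin ler_expR ler_wpM2l // fb.
Qed.

Lemma int_shift (D : set T) (f g : T -> R) (k e : R) :
  measurable D -> measurable_fun D f -> measurable_fun D g -> 0 <= k ->
  (forall x, D x -> f x <= g x + e) ->
  (\int[mu]_(x in D) (expR (k * f x))%:E <=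
     (expR (k * e))%:E * \int[mu]_(x in D) (expR (k * g x))%:E)%E.
Proof.
move=> mD mf mg k0 fg.
rewrite -ge0_integralZl_EFin //; last exact: (mexp _ _ _ mg).
apply: ge0_le_integral => //.
- exact: (mexp _ _ _ mf).
- apply/measurable_EFinP; apply: measurable_funM => //.
  by apply/measurable_EFinP; exact: (mexp _ _ _ mg).
move=> x Dx; rewrite /= lee_fin -expRD ler_expR -mulrDr addrC.
by apply: ler_wpM2l => //; exact: fg.
Qed.

End ints.

Lemma fin_sand (R : realType) (x : \bar R) (a b : R) : 0 < a -> (a%:E <= x)%E -> (x <= b%:E)%E ->
  x = (fine x)%:E /\ a <= fine x <= b.
Proof.
case: x => [r| |] //= a0; rewrite ?lee_fin.
by move=> ar rb; rewrite ar rb.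
Qed.

Lemma div_le_abs (R : realType) (x : R) (n : nat) : `|x / n.+1%:R| <= `|x|.
Proof.
rewrite normrM normfV normr_nat ler_pdivrMr ?ltr0Sn //.
by rewrite ler_peMr // ler1n.
Qed.

Lemma ln_upper (R : realType) (N : nat) (I c C2 : R) : 0 < I -> 0 < C2 ->
  I <= expR (N%:R * c) * C2 -> N.+1%:R^-1 * ln I <= c + (ln C2 - c) / N.+1%:R.
Proof.
move=> I0 C0 HI.
have h : ln I <= N%:R * c + ln C2.
  rewrite -(expRK (N%:R * c)) -lnM ?posrE ?expR_gt0 //.
  by rewrite ler_ln // posrE mulr_gt0 // expR_gt0.
have hN : (N%:R + 1 : R) != 0 by rewrite natr1 pnatr_eq0.
apply: le_trans (ler_wpM2l _ h) _; first by rewrite invr_ge0 ler0n.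
rewrite -natr1; rewrite le_eqVlt; apply/orP; left; apply/eqP; field; exact: hN.
Qed.

Lemma ln_lower (R : realType) (N : nat) (I b L : R) : 0 < L ->
  expR (N.+1%:R * b) * L <= I -> b + ln L / N.+1%:R <= N.+1%:R^-1 * ln I.
Proof.
move=> L0 HI.
have h : N.+1%:R * b + ln L <= ln I.
  rewrite -(expRK (N.+1%:R * b)) -lnM ?posrE ?expR_gt0 //.
  rewrite ler_ln // posrE ?mulr_gt0 ?expR_gt0 //.
  by apply: lt_le_trans HI; rewrite mulr_gt0 ?expR_gt0.
have hN : (N%:R + 1 : R) != 0 by rewrite natr1 pnatr_eq0.
apply: le_trans (ler_wpM2l _ h); last by rewrite invr_ge0 ler0n.
rewrite -natr1; rewrite le_eqVlt; apply/orP; left; apply/eqP; field; exact: hN.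
Qed.

Lemma ln_lower2 (R : realType) (N : nat) (I G e : R) : 0 < G -> 0 < I ->
  G <= expR (N.+1%:R * e) * I -> N.+1%:R^-1 * ln G - e <= N.+1%:R^-1 * ln I.
Proof.
move=> G0 I0 HI.
have h : ln G <= N.+1%:R * e + ln I.
  rewrite -(expRK (N.+1%:R * e)) -lnM ?posrE ?expR_gt0 //.
  by rewrite ler_ln // posrE ?mulr_gt0 ?expR_gt0.
have hN : (N%:R + 1 : R) != 0 by rewrite natr1 pnatr_eq0.
have h2 := ler_wpM2l (_ : 0 <= N.+1%:R^-1) h.
rewrite lerBlDr; apply: le_trans (h2 _) _; first by rewrite invr_ge0 ler0n.
rewrite -natr1; rewrite le_eqVlt; apply/orP; left; apply/eqP; field; exact: hN.
Qed.

Lemma avg_bound (R : realType) (T : finType) (w a : T -> R) (P : pred T) (S A m : R) :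
  (forall s, 0 <= w s) -> \sum_s w s = 1 -> 0 <= m ->
  (forall s, `|a s| <= A) -> (forall s, ~~ P s -> `|S - a s| <= m) ->
  `|S - \sum_s w s * a s| <= m + (\sum_(s | P s) w s) * (A + `|S|).
Proof.
move=> w0 w1 m0 aA good.
have -> : S - \sum_s w s * a s = \sum_s w s * (S - a s).
  rewrite -[X in X - _]mulr1 -w1 mulr_sumr -sumrB.
  by apply: eq_bigr => s _; rewrite mulrBr mulrC.
apply: le_trans (ler_norm_sum _ _ _) _.
rewrite (bigID P) /= addrC lerD //.
  apply: le_trans (_ : \sum_(i | ~~ P i) w i * m <= m).
    apply: ler_sum => s Ps; rewrite normrM ger0_norm //.
    by apply: ler_wpM2l => //; exact: good.
  rewrite -mulr_suml -[X in _ <= X]mul1r ler_wpM2r // -w1.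
  rewrite [X in _ <= X](bigID (fun s => ~~ P s)) /= lerDl.
  by apply: sumr_ge0 => s _.
rewrite mulr_suml; apply: ler_sum => s Ps; rewrite normrM ger0_norm //.
apply: ler_wpM2l => //.
by apply: le_trans (ler_normB _ _) _; rewrite addrC lerD2r.
Qed.


Theorem mainTheorem13 (R : realType) (M : nat)
  (K : set 'rV[R]_M)
  (Sigma : nat -> finType)
  (mu : forall N : nat, {ffun Sigma N -> R})
  (FN : forall N : nat, 'rV[R]_M -> Sigma N -> R)
  (F : 'rV[R]_M -> R) :
  (* K compact with positive Lebesgue measure *)
  compact K ->
  (0 < lebM K)%E ->
  (* mu_N is a probability measure on the finite set Sigma_N *)
  (forall N : nat, (0 < N)%N ->
     (forall s, 0 <= mu N s) /\ \sum_(s : Sigma N) mu N s = 1) ->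
  (* measurability of F_N (on R^M x Sigma_N, Sigma_N discrete) and of F *)
  (forall N : nat, (0 < N)%N -> forall s : Sigma N,
     measurableRM (fun p => FN N p s)) ->
  measurableRM F ->
  (* sup_N sup_{K x Sigma_N} |F_N| < oo *)
  (exists B : R, forall N : nat, (0 < N)%N -> forall p (s : Sigma N),
     K p -> `|FN N p s| <= B) ->
  (* F bounded on K *)
  (exists B : R, forall p, K p -> `|F p| <= B) ->
  (* mu_N (sup_K |F_N(., s) - F| > eps) -> 0 for every eps > 0 *)
  (forall eps : R, 0 < eps ->
     (fun N : nat => \sum_(s : Sigma N |
          `[< exists2 p, K p & eps < `|FN N p s - F p| >]) mu N s)
       @ \oo --> (0 : R)) ->
  (* (1/N) log int_K e^{N F} -> sup_K F *)
  (fun N : nat =>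
     N%:R^-1 * ln (fine (intRM K (fun p => (expR (N%:R * F p))%:E))))
     @ \oo --> sup [set F p | p in K] ->
  (* (a) *)
  (exists C1 : R, forall N : nat, (0 < N)%N -> forall p (s : Sigma N),
     FN N p s < C1) ->
  (* (b) *)
  (exists C2 : R, forall N : nat, (0 < N)%N -> forall s : Sigma N,
     (intRM setT (fun p => (expR (FN N p s))%:E) < C2%:E)%E) ->
  (* (c) *)
  (exists2 delta : R, 0 < delta &
     forall N : nat, (0 < N)%N -> forall p (s : Sigma N),
       ~ K p -> FN N p s - sup [set F q | q in K] < - delta) ->
  (* conclusion *)
  (fun N : nat =>
     N%:R^-1 * \sum_(s : Sigma N) mu N s *
       ln (fine (intRM setT (fun p => (expR (N%:R * FN N p s))%:E))))
    @ \oo --> sup [set F p | p in K].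
Proof.
move=> cK lebK mup mFN mF [B HB] [BF HBF] Hbad Hg [C1 HC1] [C2 HC2] [del del0 Hdel].
set S := sup [set F p | p in K].
set lam := lebesgueM R M.
set K' := vec_of (M:=M) @^-1` K.
have mK : measurable K' := compact_meas _ _ _ cK.
have [[p0 Kp0]|nK] := pselect (exists p, K p); last first.
  exfalso; move: lebK; rewrite /lebM -/K' (_ : K' = set0) ?measure0 ?ltxx //.
  by apply/seteqP; split => x //= Kx; apply: nK; exists (vec_of x).
have hsup : has_sup [set F p | p in K].
  split; first by exists (F p0), p0.
  exists BF => _ [p Kp <-]; have := HBF p Kp; rewrite ler_norml => /andP[].
  by [].
have FS : forall p, K p -> F p <= S.
  by move=> p Kp; apply: sup_upper_bound => //; exists p.
have [s1 _] : exists s : Sigma 1, true.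
  case: (pickP (fun _ : Sigma 1 => true)) => [s _|h]; first by exists s.
  have := (mup 1%N isT).2; rewrite big_pred0 // => /eqP; rewrite eq_sym oner_eq0.
  by [].
have B0 : 0 <= B by apply: le_trans (HB 1%N isT p0 s1 Kp0).
have mFK : forall N (hN : (0 < N)%N) s, measurable_fun K' (fun p => FN N (vec_of p) s).
  by move=> N hN s; apply: measurable_funS (mFN N hN s).
have mFvK : measurable_fun K' (fun p => F (vec_of p)).
  by apply: measurable_funS mF.
have HC2' : forall N (hN : (0 < N)%N) s,
    (\int[lam]_x (expR (1 * FN N (vec_of x) s))%:E < C2%:E)%E.
  move=> N hN s; under eq_integral => x _ do rewrite mul1r.
  by have := HC2 N hN s; rewrite /intRM preimage_setT.
have C20 : 0 < C2.
  rewrite -lte_fin; apply: le_lt_trans (HC2' 1%N isT s1).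
  by apply: integral_ge0 => x _; rewrite lee_fin expR_ge0.
have [lamE L0] : lam K' = (fine (lam K'))%:E /\ 0 < fine (lam K').
  have h1 : ((expR (1 * - B))%:E * lam K' < C2%:E)%E.
    apply: le_lt_trans (HC2' 1%N isT s1).
    apply: le_trans (@int_sub _ _ _ lam K' _ 1 mK (mFN 1%N isT s1)).
    apply: (@int_lower _ _ _ lam) => //; first exact: mFK.
    by move=> x Kx; have := HB 1%N isT _ s1 Kx; rewrite ler_norml => /andP[].
  move: lebK h1; rewrite /lebM -/K' -/lam.
  case: (lam K') => [r| |] //=.
  by move=> _; rewrite mulry gtr0_sg ?expR_gt0 // mul1e ltNge leey.
set L := fine (lam K') in lamE L0.
pose I n s := fine (intRM setT (fun p => (expR (n.+1%:R * FN n.+1 p s))%:E)).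
have Jeq : forall n s,
    intRM setT (fun p => (expR (n.+1%:R * FN n.+1 p s))%:E) = (I n s)%:E /\
    expR (n.+1%:R * - B) * L <= I n s <= expR (n%:R * C1) * C2.
  move=> n s; apply: fin_sand.
  - by rewrite mulr_gt0 // expR_gt0.
  - rewrite EFinM -lamE /intRM preimage_setT.
    apply: le_trans _ (@int_sub _ _ _ lam K' _ _ mK (mFN n.+1 isT s)).
    apply: (@int_lower _ _ _ lam) => //; first exact: mFK n.+1 isT s.
    by move=> x Kx; have := HB n.+1 isT _ s Kx; rewrite ler_norml => /andP[].
  - rewrite /intRM preimage_setT.
    apply: le_trans (@int_upper _ _ _ lam _ C1 n (mFN n.+1 isT s) (fun x => ltW (HC1 n.+1 isT _ s))) _.
    rewrite EFinM; apply: lee_wpmul2l; first by rewrite lee_fin expR_ge0.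
    exact: ltW (HC2' n.+1 isT s).
have Jup : forall n s c, (forall p, FN n.+1 p s <= c) -> I n s <= expR (n%:R * c) * C2.
  move=> n s c Hc; have [E _] := Jeq n s.
  rewrite -lee_fin -E /intRM preimage_setT.
  apply: le_trans (@int_upper _ _ _ lam _ c n (mFN n.+1 isT s) (fun x => Hc _)) _.
  rewrite EFinM; apply: lee_wpmul2l; first by rewrite lee_fin expR_ge0.
  exact: ltW (HC2' n.+1 isT s).
pose G n := fine (intRM K (fun p => (expR (n.+1%:R * F p))%:E)).
have Geq : forall n, intRM K (fun p => (expR (n.+1%:R * F p))%:E) = (G n)%:E /\
    expR (n.+1%:R * - BF) * L <= G n <= expR (n.+1%:R * BF) * L.
  move=> n; apply: fin_sand; first by rewrite mulr_gt0 // expR_gt0.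
  - rewrite EFinM -lamE; apply: (@int_lower _ _ _ lam) => //.
    by move=> x Kx; have := HBF _ Kx; rewrite ler_norml => /andP[].
  - rewrite EFinM -lamE; apply: (@int_upper_cst _ _ _ lam) => //.
    by move=> x Kx; have := HBF _ Kx; rewrite ler_norml => /andP[].
have Glow : forall n s eps, (forall p, K p -> `|FN n.+1 p s - F p| <= eps) ->
    G n <= expR (n.+1%:R * eps) * I n s.
  move=> n s eps H.
  have [EG _] := Geq n; have [EI _] := Jeq n s.
  rewrite -lee_fin EFinM -EG -EI /intRM preimage_setT.
  apply: le_trans (@int_shift _ _ _ lam K' _ (fun p => FN n.+1 (vec_of p) s) _ eps mK mFvK (mFK n.+1 isT s) (ler0n _ _) _) _.
    by move=> x Kx; have := H _ Kx; rewrite distrC ler_norml => /andP[_]; rewrite lerBlDr addrC.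
  apply: lee_wpmul2l; first by rewrite lee_fin expR_ge0.
  exact: (@int_sub _ _ _ lam K' _ _ mK (mFN n.+1 isT s)).
have I0 : forall n s, 0 < I n s.
  move=> n s; have [_ /andP[lo _]] := Jeq n s.
  by apply: lt_le_trans lo; rewrite mulr_gt0 // expR_gt0.
have G0 : forall n, 0 < G n.
  move=> n; have [_ /andP[lo _]] := Geq n.
  by apply: lt_le_trans lo; rewrite mulr_gt0 // expR_gt0.
rewrite -cvg_shiftS /=.
apply/cvgrPdist_le => e e0.
set eps := e / 4.
have eps0 : 0 < eps by rewrite divr_gt0.
set A := B + `|ln L| + `|C1| + `|ln C2 - C1|.
have A0 : 0 <= A by rewrite !addr_ge0.
set k := ln C2 - (S + eps).
have Hg' := Hg; rewrite -cvg_shiftS in Hg'.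
move/cvgrPdist_le : Hg' => /(_ eps eps0) Hg'.
have Hb := Hbad eps eps0; rewrite -cvg_shiftS in Hb.
have D0 : 0 < A + `|S| + 1 by rewrite ltr_wpDl // addr_ge0.
move/cvgrPdist_le : Hb => /(_ (eps / (A + `|S| + 1)) (divr_gt0 eps0 D0)) Hb.
have Hn := nbhs_infty_gtr (`|k| / eps).
apply: filterS (filterI Hg' (filterI Hb Hn)) => n [h1 [h2 h3]].
have h1' : `|S - n.+1%:R^-1 * ln (G n)| <= eps := h1.
pose Pb := fun s : Sigma n.+1 => `[< exists2 p : 'rV_M, K p & eps < `|FN n.+1 p s - F p| >].
have h2' : (\sum_(s | Pb s) mu n.+1 s) * (A + `|S|) <= eps.
  have Pb0 : 0 <= \sum_(s | Pb s) mu n.+1 s.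
    by apply: sumr_ge0 => s _; exact: (mup n.+1 isT).1.
  have : \sum_(s | Pb s) mu n.+1 s <= eps / (A + `|S| + 1).
    by move: h2; rewrite /= sub0r normrN ger0_norm.
  rewrite ler_pdivlMr // => h.
  by apply: le_trans h; apply: ler_wpM2l => //; rewrite lerDl.
have h3' : `|k / n.+1%:R| <= eps.
  rewrite normrM normfV normr_nat ler_pdivrMr ?ltr0Sn //.
  move: h3; rewrite ltr_pdivrMr // -natr1 => h3.
  have := ler0n R n; nra.
rewrite mulr_sumr.
under eq_bigr do rewrite mulrCA.
apply: le_trans (@avg_bound R (Sigma n.+1) (mu n.+1) (fun s => n.+1%:R^-1 * ln (I n s)) Pb S A
  (eps + `|S - n.+1%:R^-1 * ln (G n)| + `|k / n.+1%:R|) _ _ _ _ _) _.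
- exact: (mup n.+1 isT).1.
- exact: (mup n.+1 isT).2.
- by rewrite !addr_ge0 // ltW.
- move=> s; have [_ /andP[lo hi]] := Jeq n s.
  have u := @ln_upper R n _ _ _ (I0 n s) C20 hi.
  have l := @ln_lower R n _ _ _ L0 lo.
  have d1 := @div_le_abs R (ln C2 - C1) n; have d2 := @div_le_abs R (ln L) n.
  rewrite ler_norml in d1; rewrite ler_norml in d2.
  move/andP: d1 => [d1 d1']; move/andP: d2 => [d2 d2'].
  have c1 := ler_norm C1.
  have n1 := normr_ge0 C1; have n2 := normr_ge0 (ln C2 - C1); have n3 := normr_ge0 (ln L).
  rewrite ler_norml; apply/andP; rewrite /A.
  move: u l d1 d1' d2 d2'.
  move: (n.+1%:R^-1 * ln (I n s)) ((ln C2 - C1) / n.+1%:R) (ln L / n.+1%:R) => a x1 x2.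
  move=> u l d1 d1' d2 d2'; split; lra.
- move=> s /asboolPn Hs.
  have H : forall p, K p -> `|FN n.+1 p s - F p| <= eps.
    by move=> p Kp; rewrite leNgt; apply/negP => h; apply: Hs; exists p.
  have Hc : forall p, FN n.+1 p s <= S + eps.
    move=> p; have [Kp|nKp] := pselect (K p).
      have := H p Kp; rewrite ler_norml => /andP[_ h].
      have := FS p Kp; move=> ?; lra.
    have := Hdel n.+1 isT p s nKp; rewrite -/S => ?; lra.
  have u := @ln_upper R n _ _ _ (I0 n s) C20 (Jup n s _ Hc).
  have l := @ln_lower2 R n _ _ _ (G0 n) (I0 n s) (Glow n s eps H).
  have e1 := ler_norm (k / n.+1%:R).
  have e2 := ler_norm (S - n.+1%:R^-1 * ln (G n)).
  have e3 := ler_norm (- (S - n.+1%:R^-1 * ln (G n))).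
  rewrite normrN in e3.
  rewrite -/k in u; rewrite ler_norml; apply/andP.
  move: u l e1 e2 e3.
  move: (n.+1%:R^-1 * ln (I n s)) (n.+1%:R^-1 * ln (G n)) (k / n.+1%:R) => a g q.
  move=> u l e1 e2 e3; have := normr_ge0 q; have := normr_ge0 (S - g); split; lra.
have ee : e = eps + eps + eps + eps by rewrite /eps; field.
move: h2'; move: ((\sum_(s | Pb s) mu n.+1 s) * (A + `|S|)) => P h2P; lra.
Qed.
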